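(* If $(\rho,V)$ is an $R[G_n]$-module of $\psi$-Whittaker type, then the restriction map $\mathcal{W}(V,\psi_R)\to\mathrm{Ind}_{N_n}^{P_n}\psi_R$, $W\mapsto W|_{P_n}$, is surjective.
   Context: Let $p$ be a prime, $q$ a power of $p$, $G_n=\mathrm{GL}_n(\mathbb{F}_q)$, $R$ a commutative Noetherian $\mathbb{Z}[\frac1p,\zeta_p]$-algebra with $0\ne1$. $N_n$ is the upper unipotent subgroup and $P_n$ the mirabolic subgroup (matrices with last row $(0,\dots,0,1)$). Fix nontrivial $\psi:(\mathbb{F}_q,+)\to\mathbb{Z}[\frac1p,\zeta_p]^\times$, with image $\psi_R$ in $R^\times$, a character of $N_n$ via $u\mapsto\psi_R(\sum_iu_{i,i+1})$. $\mathrm{Ind}_{N_n}^{H}\psi_R=\{f:H\to R: f(uh)=\psi_R(u)f(h)\}$ for $H=P_n,G_n$. $V$ is of $\psi$-Whittaker type if its $(N_n,\psi_R)$-coinvariants are free of rank one over $R$; a generator $\lambda$ of their $R$-dual gives $V\to\mathrm{Ind}_{N_n}^{G_n}\psi_R$, $v\mapsto(g\mapsto\lambda(\overline{gv}))$, with image the Whittaker model $\mathcal{W}(V,\psi_R)$. *)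

(* Defs.v *)
From HB Require Import structures.
From mathcomp Require Import all_boot all_order all_algebra all_fingroup all_field.
Set Implicit Arguments. Unset Strict Implicit. Unset Printing Implicit Defensive.
Import GRing.Theory.
Local Open Scope ring_scope.

Definition is_ideal (R : comNzRingType) (I : R -> Prop) : Prop :=
  [/\ I 0, (forall x y, I x -> I y -> I (x + y)) & (forall r x, I x -> I (r * x))].

Definition noetherian (R : comNzRingType) : Prop :=
  forall I : nat -> R -> Prop,
    (forall k, is_ideal (I k)) -> (forall k x, I k x -> I k.+1 x) ->
    exists m, forall k x, (m <= k)%N -> I k x -> I m x.

(* psi_R(a) = zeta ^ e(a), where zeta is the image in R of the primitive p-th root
   of unity zeta_p and e : F_q -> Z/p is additive (psi = zeta_p ^ e). *)
Definition psiR (R : comNzRingType) (F : finFieldType) (zeta : R) (e : F -> nat) (a : F) : R :=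
  zeta ^+ e a.

(* G_n = GL_{n+1}(F) (matrix size n.+1). *)
Definition unipotent (F : finFieldType) (n : nat) : {set {'GL_n.+1[F]}} :=
  [set g : {'GL_n.+1[F]} | [forall i : 'I_n.+1, [forall j : 'I_n.+1,
      (((j < i)%N ==> (GLval g i j == 0)) && ((i == j) ==> (GLval g i j == 1)))]]].

Definition mirabolic (F : finFieldType) (n : nat) : {set {'GL_n.+1[F]}} :=
  [set g : {'GL_n.+1[F]} | [forall j : 'I_n.+1, GLval g ord_max j == (j == ord_max)%:R]].

Definition psiN (R : comNzRingType) (F : finFieldType) (n : nat) (psi : F -> R)
  (u : {'GL_n.+1[F]}) : R :=
  psi (\sum_(i < n) GLval u (widen_ord (leqnSn n) i) (lift ord0 i)).

Definition is_rep (R : comNzRingType) (G : finGroupType) (V : lmodType R)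
  (rho : G -> V -> V) : Prop :=
  [/\ (forall g a u v, rho g (a *: u + v) = a *: rho g u + rho g v),
      (forall v, rho 1%g v = v) &
      (forall g h v, rho (g * h)%g v = rho g (rho h v))].

(* kernel of V -> V_{N,chi}: the R-span of rho(u) v - chi(u) v, u in N *)
Definition coinv_ker (R : comNzRingType) (G : finGroupType) (V : lmodType R)
  (rho : G -> V -> V) (N : {set G}) (chi : G -> R) (v : V) : Prop :=
  exists s : seq (R * (G * V)),
    all (fun x => x.2.1 \in N) s /\
    v = \sum_(x <- s) x.1 *: (rho x.2.1 x.2.2 - chi x.2.1 *: x.2.2).

(* (N,chi)-coinvariants free of rank one over R: some v0 whose class is a basis
   of V / coinv_ker. *)
Definition whittaker_type (R : comNzRingType) (G : finGroupType) (V : lmodType R)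
  (rho : G -> V -> V) (N : {set G}) (chi : G -> R) : Prop :=
  exists v0 : V, forall v : V,
    exists! r : R, coinv_ker rho N chi (v - r *: v0).

(* R-linear functionals on V_{N,chi} = R-linear functionals on V vanishing on the kernel *)
Definition coinv_functional (R : comNzRingType) (G : finGroupType) (V : lmodType R)
  (rho : G -> V -> V) (N : {set G}) (chi : G -> R) (mu : V -> R) : Prop :=
  (forall a u v, mu (a *: u + v) = a * mu u + mu v) /\
  (forall v, coinv_ker rho N chi v -> mu v = 0).

Definition dual_generator (R : comNzRingType) (G : finGroupType) (V : lmodType R)
  (rho : G -> V -> V) (N : {set G}) (chi : G -> R) (lam : V -> R) : Prop :=
  coinv_functional rho N chi lam /\
  (forall mu, coinv_functional rho N chi mu -> exists r : R, forall v, mu v = r * lam v).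

Definition whittaker_model (R : comNzRingType) (G : finGroupType) (V : lmodType R)
  (rho : G -> V -> V) (lam : V -> R) (W : G -> R) : Prop :=
  exists v : V, forall g, W g = lam (rho g v).

(* Ind_N^H chi: functions on H with f(u h) = chi(u) f(h) (values off H irrelevant) *)
Definition in_Ind (R : comNzRingType) (G : finGroupType) (N H : {set G}) (chi : G -> R)
  (f : G -> R) : Prop :=
  forall u h, u \in N -> h \in H -> f (u * h)%g = chi u * f h.

(* Main.v *)
Require Import Defs.
From HB Require Import structures.
From mathcomp Require Import all_boot all_order all_algebra all_fingroup all_field.
From mathcomp Require Import pgroup cyclic.
From Stdlib Require Import IndefiniteDescription.
Set Implicit Arguments. Unset Strict Implicit. Unset Printing Implicit Defensive.
Import GRing.Theory.
Local Open Scope ring_scope.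


Lemma pchar_mx (F : finFieldType) n p : p \in [pchar F] -> p \in [pchar 'M[F]_n.+1].
Proof.
move=> pF; apply/andP; split; first exact: pcharf_prime pF.
have -> : (p%:R : 'M[F]_n.+1) = (p%:R : F)%:M.
  by rewrite (raddfMn (@scalar_mx F n.+1)).

by rewrite pcharf0 // raddf0.
Qed.

Lemma ordeqF m (i j : 'I_m) : (i < j)%N -> (i == j) = false.
Proof. by move=> lt; rewrite -val_eqE /= ltn_eqF. Qed.

Lemma nilp_mx (F : finFieldType) n (Z : 'M[F]_n.+1) :
  (forall i j : 'I_n.+1, (j <= i)%N -> Z i j = 0) ->
  forall k (i j : 'I_n.+1), (j < i + k)%N -> (Z ^+ k) i j = 0.
Proof.
move=> HZ; elim=> [|k IH] i j.
  by rewrite addn0 expr0 mxE => lt; rewrite eq_sym ordeqF.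
move=> lt; rewrite exprSr -mulmxE mxE big1 // => l _.
case: (ltnP l (i + k)) => [lt2|ge]; first by rewrite IH // mul0r.
by rewrite HZ ?mulr0 // -ltnS (leq_trans lt) // addnS ltnS.
Qed.

Lemma frob_pow (F : finFieldType) n p (Z : 'M[F]_n.+1) : p \in [pchar F] ->
  forall m, (1 + Z) ^+ (p ^ m) = 1 + Z ^+ (p ^ m).
Proof.
move=> /(pchar_mx n) pM; elim=> [|m IH]; first by rewrite !expn0 !expr1.
rewrite expnSr !exprM IH.
have := pFrobenius_autD_comm pM (commr_sym (commr1 (Z ^+ (p ^ m)))).
by rewrite !pFrobenius_autE expr1n.
Qed.

Section Mat.
Variables (F : finFieldType) (n : nat).
Local Notation G := {'GL_n.+1[F]}.

Definition Sset (m : nat) : {set G} :=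
  [set g : G | [forall l : 'I_n.+1, [forall j : 'I_n.+1,
     (m <= l)%N ==> (j <= l)%N ==> (GLval g l j == (j == l)%:R)]]].

Lemma SsetP m (g : G) : reflect (forall l j : 'I_n.+1, (m <= l)%N -> (j <= l)%N ->
   GLval g l j = (j == l)%:R) (g \in Sset m).
Proof.
rewrite inE; apply: (iffP forallP) => [H l j ml jl | H l].
  by move: (forallP (H l) j); rewrite ml jl => /eqP.
by apply/forallP => j; apply/implyP => ml; apply/implyP => jl; rewrite H.
Qed.

Lemma Sset_group m : group_set (Sset m).
Proof.
apply/andP; split.
  by apply/SsetP => l j _ _; rewrite GL_1E mxE eq_sym.
apply/subsetP => x /imset2P [g h /SsetP Hg /SsetP Hh ->].
apply/SsetP => l j ml jl; rewrite GL_MxE mxE (bigD1 l) //= Hg // eqxx mul1r.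
rewrite Hh // big1 ?addr0 // => i il.
case: (ltngtP i l) => [lt|gt|eq]; last by rewrite (val_inj eq) eqxx in il.
  by rewrite Hg ?(ltnW lt) // (negbTE il) mul0r.
rewrite (Hh i j) ?(leq_trans ml (ltnW gt)) ?(leq_trans jl (ltnW gt)) //.
by rewrite (_ : (j == i) = false) ?mulr0 // -val_eqE /= ltn_eqF // (leq_ltn_trans jl gt).
Qed.

Canonical Sgroup m := Group (Sset_group m).

Lemma S1 m : (1%g : G) \in Sset m.
Proof. by apply/SsetP => l j _ _; rewrite GL_1E mxE eq_sym. Qed.

Lemma SM m x y : x \in Sset m -> y \in Sset m -> (x * y)%g \in Sset m.
Proof.
move=> /SsetP Hg /SsetP Hh.
apply/SsetP => l j ml jl; rewrite GL_MxE mxE (bigD1 l) //= Hg // eqxx mul1r.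
rewrite Hh // big1 ?addr0 // => i il.
case: (ltngtP i l) => [lt|gt|eq]; last by rewrite (val_inj eq) eqxx in il.
  by rewrite Hg ?(ltnW lt) // (negbTE il) mul0r.
rewrite (Hh i j) ?(leq_trans ml (ltnW gt)) ?(leq_trans jl (ltnW gt)) //.
by rewrite (_ : (j == i) = false) ?mulr0 // -val_eqE /= ltn_eqF // (leq_ltn_trans jl gt).
Qed.

Lemma SV m x : x \in Sset m -> (x^-1)%g \in Sset m.
Proof.
move=> /SsetP Hx; apply/SsetP; rewrite GL_VxE.
set q := invmx (GLval x).
have xq : GLval x *m q = 1%:M by rewrite /q mulmxV // GL_unitmx.
suff H : forall k (l : 'I_n.+1), (m <= l)%N -> (n <= l + k)%N ->
    forall j : 'I_n.+1, (j <= l)%N -> q l j = (j == l)%:R.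
  by move=> l j ml jl; apply: (H n) => //; rewrite leq_addl.
elim=> [|k IH] l ml nl j jl.
  have lE : nat_of_ord l = n by rewrite addn0 in nl; apply/eqP; rewrite eqn_leq leq_ord nl.
  have E := congr1 (fun M : 'M[F]_n.+1 => M l j) xq.
  rewrite !mxE in E.
  have S0 : \sum_(i < n.+1) GLval x l i * q i j = q l j.
    rewrite (eq_bigr (fun i => if i == l then q l j else 0)) => [|i _].
      by rewrite -big_mkcond big_pred1_eq.
    case: (eqVneq i l) => [->|il]; first by rewrite Hx // eqxx mul1r.
    case: (ltngtP i l) => [lt|gt|eq]; last by rewrite (val_inj eq) eqxx in il.
      by rewrite Hx ?(ltnW lt) // (negbTE il) mul0r.
    by move: (ltn_ord i) gt; rewrite lE ltnS => /leq_ltn_trans H /H; rewrite ltnn.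
  by rewrite S0 eq_sym in E.
have E := congr1 (fun M : 'M[F]_n.+1 => M l j) xq.
rewrite !mxE in E.
have S0 : \sum_(i < n.+1) GLval x l i * q i j = q l j.
  rewrite (eq_bigr (fun i => if i == l then q l j else 0)) => [|i _].
    by rewrite -big_mkcond big_pred1_eq.
  case: (eqVneq i l) => [->|il]; first by rewrite Hx // eqxx mul1r.
  case: (ltngtP i l) => [lt|gt|eq]; last by rewrite (val_inj eq) eqxx in il.
    by rewrite Hx ?(ltnW lt) // (negbTE il) mul0r.
  rewrite IH ?(leq_trans ml (ltnW gt)) ?(leq_trans jl (ltnW gt)) //.
    by rewrite (_ : (j == i) = false) ?mulr0 // -val_eqE /= ltn_eqF // (leq_ltn_trans jl gt).
  by rewrite (leq_trans nl) // addnS -addSn leq_add2r.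
by rewrite S0 eq_sym in E.
Qed.

Lemma SVV m x : ((x^-1)%g \in Sset m) = (x \in Sset m).
Proof. by apply/idP/idP => /SV //; rewrite invgK. Qed.

Lemma SMl m u x : u \in Sset m -> ((u * x)%g \in Sset m) = (x \in Sset m).
Proof.
move=> uS; apply/idP/idP => H; last exact: SM.
by rewrite -(mulKg u x); apply: SM => //; apply: SV.
Qed.

Lemma SMr m h x : h \in Sset m -> ((x * h)%g \in Sset m) = (x \in Sset m).
Proof.
move=> hS; apply/idP/idP => H; last exact: SM.
by rewrite -(mulgK h x); apply: SM => //; apply: SV.
Qed.


Variable p : nat.
Hypothesis pF : p \in [pchar F].

Lemma unip_order (g : G) : g \in Sset 0 -> (g ^+ (p ^ n.+1) = 1)%g.
Proof.
move/SsetP=> Hg; apply: val_inj.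
rewrite [LHS](FinRing.val_unitX (p ^ n.+1) g) /=.
have -> : val g = 1 + (GLval g - 1) by rewrite addrC subrK.
rewrite frob_pow //.
have pp := pcharf_prime pF.
have Zn : (GLval g - 1) ^+ n.+1 = 0.
  apply/matrixP => i j; rewrite [RHS]mxE nilp_mx //.
    by move=> a b ba; rewrite !mxE Hg // eq_sym subrr.
  by rewrite addnS ltnS (leq_trans (leq_ord j)) // leq_addl.
by rewrite -(subnKC (ltnW (ltn_expl n.+1 (prime_gt1 pp)))) exprD Zn mul0r addr0.
Qed.

Lemma N_pgroup : pgroup p (Sset 0).
Proof.
have pp := pcharf_prime pF.
apply/pgroupP => r pr rdiv; have [x xN ox] := Cauchy pr rdiv.
have : (#[x]%g %| p ^ n.+1)%N by rewrite order_dvdn unip_order.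
rewrite ox => /(dvdn_pfactor _ _ pp) [m _ rE].
case: m rE => [|m] rE; first by rewrite rE in pr.
by rewrite inE -(pdiv_id pr) rE pdiv_pfactor.
Qed.


Lemma unitE1 (Z : 'M[F]_n.+1) : Z *m Z = 0 -> (1%:M + Z) \in unitmx.
Proof.
move=> ZZ; have := @mulmx1_unit _ _ (1%:M + Z) (1%:M - Z).
rewrite mulmxDl !mulmxBr !mul1mx mulmx1 ZZ subr0 subrK => /(_ erefl).
by case.
Qed.

Definition mkU (Z : 'M[F]_n.+1) : G := insubd (1%g : G) (1%:M + Z).

Lemma mkUE Z : Z *m Z = 0 -> GLval (mkU Z) = 1%:M + Z.
Proof. by move=> ZZ; rewrite /mkU insubdK //; exact: unitE1. Qed.

Lemma sq0Z (t : F) (Z : 'M[F]_n.+1) : Z *m Z = 0 -> (t *: Z) *m (t *: Z) = 0.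
Proof. by move=> ZZ; rewrite -scalemxAl -scalemxAr ZZ !scaler0. Qed.

Lemma psiN_U (R : comNzRingType) (chi : F -> R) Z : Z *m Z = 0 ->
  psiN (n:=n) chi (mkU Z) =
  chi (\sum_(i < n) Z (widen_ord (leqnSn n) i) (lift ord0 i)).
Proof.
move=> ZZ; rewrite /psiN mkUE //; congr chi; apply: eq_bigr => i _.
rewrite !mxE (_ : (widen_ord _ i == lift ord0 i) = false) ?add0r //.
by apply/negbTE; rewrite -val_eqE /= /bump /= add1n neq_ltn ltnSn.
Qed.

Lemma mkU_S0 Z : Z *m Z = 0 -> (forall a b : 'I_n.+1, (b <= a)%N -> Z a b = 0) ->
  mkU Z \in Sset 0.
Proof.
move=> ZZ HZ; apply/SsetP => a b _ ba.
by rewrite mkUE // !mxE HZ // addr0 eq_sym.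
Qed.


Lemma vanish (R : comNzRingType) (chi : F -> R) (Phi : G -> R) :
  (forall a b, chi (a + b) = chi a * chi b) -> chi 0 = 1 ->
  (forall c : R, (forall x, chi x * c = c) -> c = 0) ->
  (forall u g, u \in Sset 0 -> Phi (u * g)%g = psiN (n:=n) chi u * Phi g) ->
  (forall u g, u \in Sset 0 -> Phi (g * u)%g = Phi g * psiN (n:=n) chi u) ->
  forall h, h \in Sset n -> h \notin Sset 0 -> Phi h = 0.
Proof.
move=> chiD chi0 kill Hl Hr h hP hN.
have hm : exists m, h \in Sset m by exists n.
have [m hSm minm] := ex_minnP hm.
have mn : (m <= n)%N := minm n hP.
have m0 : (0 < m)%N.
  by rewrite lt0n; apply/eqP => m0; rewrite m0 in hSm; rewrite hSm in hN.
set k := m.-1; have km : m = k.+1 by rewrite prednK.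
have hk : h \notin Sset k by apply/negP => /minm; rewrite km ltnn.
move: hk; rewrite inE negb_forall => /existsP [l]; rewrite negb_forall.
move=> /existsP [j]; rewrite !negb_imply => /and3P [kl jl /eqP neq].
have Hh := SsetP _ _ hSm.
have lk : nat_of_ord l = k.
  apply/eqP; rewrite eqn_leq kl andbT -ltnS -km; rewrite ltnNge; apply/negP => ml.
  by apply: neq; rewrite Hh.
have kn : (k < n)%N by rewrite -ltnS -km.
pose kk : 'I_n := Ordinal kn.
pose k1 : 'I_n.+1 := lift ord0 kk.
have k1E : nat_of_ord k1 = m by rewrite /= /bump /= add1n km.
pose X : 'M[F]_n.+1 := delta_mx j k1.
have qS : (h^-1)%g \in Sset m by apply: SV.
have Hq := SsetP _ _ qS.
pose q := GLval (h^-1)%g.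
have hq : q *m GLval h = 1%:M by rewrite /q GL_VxE mulVmx // GL_unitmx.
pose Y := GLval h *m X *m q.
have Yfac : forall a b, Y a b = GLval h a j * q k1 b.
  move=> a b; rewrite /Y mxE (bigD1 k1) //= big1 ?addr0.
    rewrite mxE (bigD1 j) //= big1 ?addr0; first by rewrite mxE !eqxx mulr1.
    by move=> i ij; rewrite mxE (negbTE ij) mulr0.
  move=> c ck; rewrite mxE big1 ?mul0r // => i _.
  by rewrite mxE (negbTE ck) andbF mulr0.
have hj0 : forall a : 'I_n.+1, (m <= a)%N -> GLval h a j = 0.
  move=> a ma; rewrite Hh //; last by rewrite (leq_trans jl) // lk (leq_trans _ ma) // km leqnSn.
  by rewrite ordeqF // (leq_trans _ ma) // km ltnS -lk.
have qk0 : forall b : 'I_n.+1, (b < m)%N -> q k1 b = 0.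
  by move=> b bm; rewrite Hq ?k1E // ?ordeqF ?k1E // ltnW.
have qkk : q k1 k1 = 1 by rewrite Hq ?k1E // eqxx.
have XX : X *m X = 0.
  by rewrite /X mul_delta_mx_cond (_ : (k1 == j) = false) //
    eq_sym ordeqF // k1E km ltnS -lk.
have YY : Y *m Y = 0.
  by rewrite /Y -!mulmxA (mulmxA q) hq mul1mx (mulmxA X) XX !mul0mx mulmx0.
have Xs : forall a b : 'I_n.+1, (b <= a)%N -> X a b = 0.
  move=> a b ba; rewrite mxE; case: eqP => //= aj; case: eqP => //= bk.
  by move: ba; rewrite aj bk k1E km => /leq_trans/(_ jl); rewrite lk ltnn.
have Ys : forall a b : 'I_n.+1, (b <= a)%N -> Y a b = 0.
  move=> a b ba; rewrite Yfac; case: (ltnP a m) => am.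
    by rewrite qk0 ?mulr0 // (leq_ltn_trans ba).
  by rewrite hj0 ?mul0r.
have wk : widen_ord (leqnSn n) kk = l by apply: val_inj; rewrite /= lk.
have Xsup : \sum_(i < n) X (widen_ord (leqnSn n) i) (lift ord0 i) = (j == l)%:R.
  rewrite (bigD1 kk) //= big1 ?addr0.
    by rewrite mxE eqxx andbT wk eq_sym.
  move=> i ik; rewrite mxE (_ : (lift ord0 i == k1) = false) ?andbF //.
  by apply: negbTE; apply: contra ik => /eqP /lift_inj ->.
have Ysup : \sum_(i < n) Y (widen_ord (leqnSn n) i) (lift ord0 i) = GLval h l j.
  rewrite (bigD1 kk) //= big1 ?addr0.
    by rewrite Yfac qkk mulr1 wk.
  move=> i ik; rewrite Yfac; case: (ltnP i k) => ik'.
    by rewrite qk0 ?mulr0 //= /bump /= add1n km ltnS.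
  rewrite hj0 ?mul0r //= km; rewrite leq_eqVlt in ik'; case/orP: ik' => // /eqP ik'.
  by case/eqP: ik; apply: val_inj.
have key : forall t : F, chi (t * GLval h l j) * Phi h = Phi h * chi (t * (j == l)%:R).
  move=> t.
  have e1 : (mkU (t *: Y) * h)%g = (h * mkU (t *: X))%g.
    apply: val_inj; change (GLval (mkU (t *: Y) * h)%g = GLval (h * mkU (t *: X))%g).
    rewrite !GL_MxE !mkUE ?sq0Z //.
    rewrite mulmxDl mulmxDr mul1mx mulmx1 -!scalemxAl /Y -!mulmxA hq mulmx1.
    by rewrite scalemxAr.
  have YS : mkU (t *: Y) \in Sset 0.
    by apply: mkU_S0; [exact: sq0Z | move=> a b ba; rewrite mxE Ys ?mulr0].
  have XS : mkU (t *: X) \in Sset 0.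
    by apply: mkU_S0; [exact: sq0Z | move=> a b ba; rewrite mxE Xs ?mulr0].
  have := Hl _ h YS; rewrite e1 Hr //.
  rewrite !psiN_U ?sq0Z //.
  have sumZ : forall Z : 'M[F]_n.+1, \sum_(i < n) (t *: Z) (widen_ord (leqnSn n) i) (lift ord0 i)
      = t * \sum_(i < n) Z (widen_ord (leqnSn n) i) (lift ord0 i).
    by move=> Z; rewrite mulr_sumr; apply: eq_bigr => i _; rewrite mxE.
  by rewrite !sumZ Xsup Ysup => ->.
set a := GLval h l j; set b : F := (j == l)%:R.
have ab : a - b != 0 by rewrite subr_eq0; apply/eqP.
apply: kill => x.
pose t := x / (a - b).
have tab : t * (a - b) = x by rewrite /t divfK.
have ta : t * a = t * b + x by rewrite -tab mulrBr addrC subrK.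
have cc : chi (- (t * b)) * chi (t * b) = 1 by rewrite -chiD addNr chi0.
have E := key t; rewrite ta chiD -/b in E.
transitivity (chi (- (t * b)) * (chi (t * b) * chi x * Phi h)).
  by rewrite !mulrA cc mul1r.
by rewrite E mulrCA cc mulr1.
Qed.


Lemma unip_eq : unipotent F n = Sset 0.
Proof.
apply/setP => g; rewrite !inE; apply/forallP/forallP => H i; apply/forallP => j;
  have := forallP (H i) j.
  move=> /andP [H1 H2]; apply/implyP => _; apply/implyP; rewrite leq_eqVlt.
  case/orP => [/eqP/val_inj ji | lt].
    by subst j; move: H2; rewrite eqxx /= => /eqP ->; rewrite eqxx.
  by rewrite ordeqF // /=; rewrite lt /= in H1.
move=> H1; apply/andP; split; apply/implyP => c.
  by move: H1; rewrite /= ltnW //= ordeqF.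
by rewrite (eqP c) in H1 *; move: H1; rewrite /= leqnn eqxx.
Qed.

Lemma mirab_eq : mirabolic F n = Sset n.
Proof.
apply/setP => g; rewrite !inE; apply/forallP/forallP => H i.
  apply/forallP => j; apply/implyP => ni; apply/implyP => _.
  have -> : i = ord_max by apply: val_inj; apply/eqP; rewrite eqn_leq leq_ord ni.
  exact: H.
by have := forallP (H ord_max) i; rewrite /= leqnn /= leq_ord.
Qed.

Lemma S0_Sn g : g \in Sset 0 -> g \in Sset n.
Proof. by move/SsetP => H; apply/SsetP => l j _; apply: H. Qed.

Lemma subsetP_helper : Sset 0 \subset Sset n.
Proof. by apply/subsetP => x; exact: S0_Sn. Qed.

End Mat.

Section Rep.
Variables (R : comNzRingType) (Gt : finGroupType) (V : lmodType R).
Variable (rho : Gt -> V -> V).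
Hypothesis Hrep : is_rep rho.

Lemma rho0 g : rho g 0 = 0.
Proof.
case: Hrep => lin _ _; have := lin g 1 0 0; rewrite !scale1r addr0 => H.
by apply: (addIr (rho g 0)); rewrite add0r -H.
Qed.

Lemma rhoD g u v : rho g (u + v) = rho g u + rho g v.
Proof. by case: Hrep => lin _ _; have := lin g 1 u v; rewrite !scale1r. Qed.

Lemma rhoZ g a u : rho g (a *: u) = a *: rho g u.
Proof. by case: Hrep => lin _ _; rewrite -[a *: u]addr0 lin rho0 addr0. Qed.

Lemma rho_sum g (I : Type) (r : seq I) (P : pred I) (Fv : I -> V) :
  rho g (\sum_(i <- r | P i) Fv i) = \sum_(i <- r | P i) rho g (Fv i).
Proof. exact: (big_morph (rho g) (rhoD g) (rho0 g)). Qed.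

Lemma rhoM g h v : rho (g * h)%g v = rho g (rho h v).
Proof. by case: Hrep. Qed.

Lemma rho1 v : rho 1%g v = v.
Proof. by case: Hrep. Qed.

Variables (N : {set Gt}) (chi : Gt -> R).

Lemma ker0 : coinv_ker rho N chi 0.
Proof. by exists [::]; rewrite big_nil. Qed.

Lemma kerD x y : coinv_ker rho N chi x -> coinv_ker rho N chi y ->
  coinv_ker rho N chi (x + y).
Proof.
move=> [s1 [a1 ->]] [s2 [a2 ->]]; exists (s1 ++ s2).
by rewrite all_cat a1 a2 big_cat.
Qed.

Lemma kerZ a x : coinv_ker rho N chi x -> coinv_ker rho N chi (a *: x).
Proof.
move=> [s [al ->]]; exists (map (fun y => (a * y.1, y.2)) s); split.
  by rewrite all_map.
by rewrite big_map scaler_sumr; apply: eq_bigr => y _; rewrite scalerA.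
Qed.

Lemma ker1 u w : u \in N -> coinv_ker rho N chi (rho u w - chi u *: w).
Proof.
by move=> uN; exists [:: (1, (u, w))]; rewrite /= uN big_seq1 scale1r.
Qed.

Variable lam : V -> R.
Hypothesis Hlam : coinv_functional rho N chi lam.

Lemma lam0 : lam 0 = 0.
Proof. by case: Hlam => _ K; apply: K; exact: ker0. Qed.

Lemma lamD u v : lam (u + v) = lam u + lam v.
Proof. by case: Hlam => lin _; have := lin 1 u v; rewrite scale1r mul1r. Qed.

Lemma lamZ a u : lam (a *: u) = a * lam u.
Proof. by case: Hlam => lin _; rewrite -[a *: u]addr0 lin lam0 addr0. Qed.

Lemma lam_sum (I : Type) (r : seq I) (P : pred I) (Fv : I -> V) :
  lam (\sum_(i <- r | P i) Fv i) = \sum_(i <- r | P i) lam (Fv i).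
Proof. exact: (big_morph lam lamD lam0). Qed.

Lemma lam_rho u w : u \in N -> lam (rho u w) = chi u * lam w.
Proof.
move=> uN; case: Hlam => _ K; have := K _ (ker1 w uN).
rewrite -scaleN1r lamD lamZ lamZ mulN1r => /eqP; rewrite addr_eq0 => /eqP ->.
by rewrite opprK.
Qed.


Lemma construct (P : {set Gt}) (v0 : V) (cN : R) (f : Gt -> R) :
  group_set N -> group_set P -> N \subset P -> lam v0 = 1 -> cN * (#|N|)%:R = 1 ->
  (forall Phi : Gt -> R,
     (forall u g, u \in N -> Phi (u * g)%g = chi u * Phi g) ->
     (forall u g, u \in N -> Phi (g * u)%g = Phi g * chi u) ->
     forall h, h \in P -> h \notin N -> Phi h = 0) ->
  (forall u h, u \in N -> h \in P -> f (u * h)%g = chi u * f h) ->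
  exists v, forall h, h \in P -> lam (rho h v) = f h.
Proof.
move=> HN HP NP lv0 cNE Hvan Hf.
pose NG := Group HN; pose PG := Group HP.
have N1 : (1%g : Gt) \in N by exact: (group1 NG).
have NM x y : x \in N -> y \in N -> (x * y)%g \in N by exact: (@groupM _ NG).
have NV x : x \in N -> (x^-1)%g \in N by rewrite (@groupV _ NG).
have lamrho u w : u \in N -> lam (rho u w) = chi u * lam w.
  by move=> uN; exact: (lam_rho w uN).
have psi1 : chi 1%g = 1.
  by have := lamrho 1%g v0 N1; rewrite rho1 lv0 mulr1 => /esym.
have psiM x y : x \in N -> y \in N -> chi (x * y)%g = chi x * chi y.
  move=> xN yN; have := lamrho (x * y)%g v0 (NM _ _ xN yN).
  by rewrite rhoM lamrho // lamrho // lv0 !mulr1 => ->.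
have psiV x : x \in N -> chi (x^-1)%g * chi x = 1.
  by move=> xN; rewrite -psiM ?NV // mulVg psi1.
pose v1 := \sum_(u in N) chi (u^-1)%g *: rho u v0.
have rv1 u : u \in N -> rho u v1 = chi u *: v1.
  move=> uN; rewrite /v1 rho_sum.
  under eq_bigr do rewrite rhoZ -rhoM.
  rewrite (reindex_inj (mulgI (u^-1)%g)) /=.
  rewrite (eq_bigl (fun x => x \in N)) => [|x]; last first.
    by rewrite /= (@groupMl _ NG) ?NV.
  rewrite scaler_sumr; apply: eq_bigr => x xN.
  by rewrite mulKVg invMg invgK psiM ?NV // scalerA mulrC.
have Hl u g : u \in N -> lam (rho (u * g)%g v1) = chi u * lam (rho g v1).
  by move=> uN; rewrite rhoM lamrho.
have Hr' u g : u \in N -> lam (rho (g * u)%g v1) = lam (rho g v1) * chi u.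
  by move=> uN; rewrite rhoM rv1 // rhoZ lamZ mulrC.
have Phi1 : lam (rho 1%g v1) = (#|N|)%:R.
  rewrite rho1 /v1 lam_sum -sumr_const; apply: eq_bigr => x xN.
  by rewrite lamZ lamrho // lv0 mulr1 psiV.
have PhiN u : u \in N -> lam (rho u v1) = chi u * (#|N|)%:R.
  by move=> uN; rewrite -{1}(mulg1 u) Hl // Phi1.
have PhiP h : h \in P -> h \notin N -> lam (rho h v1) = 0.
  exact: (Hvan (fun g => lam (rho g v1)) Hl Hr').
pose c := cN ^+ 2.
exists (c *: \sum_(x in P) f x *: rho (x^-1)%g v1).
move=> h hP.
rewrite rhoZ lamZ rho_sum lam_sum.
under eq_bigr do rewrite rhoZ lamZ -rhoM.
have hinj : injective (fun y : Gt => (y^-1 * h)%g).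
  by move=> y z /mulIg /invg_inj.
rewrite (reindex_inj hinj) /=.
rewrite (eq_bigl (fun y => y \in P)) => [|y]; last first.
  by rewrite /= (@groupMr _ PG) // (@groupV _ PG).
under eq_bigr do rewrite invMg invgK mulKVg.
rewrite (bigID (fun y => y \in N)) /= [X in _ + X]big1 ?addr0; last first.
  by move=> y /andP [yP yN]; rewrite PhiP ?mulr0.
rewrite (eq_bigl (fun y => y \in N)) => [|y]; last first.
  by rewrite andb_idl //; apply: (subsetP NP).
rewrite (eq_bigr (fun _ => (#|N|)%:R * f h)) => [|y yN]; last first.
  by rewrite PhiN // Hf ?NV // mulrACA psiV // mul1r mulrC.
rewrite sumr_const -[(_ * f h) *+ _]mulr_natl mulrA -expr2 mulrA /c -exprMn cNE expr1n mul1r.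
by [].
Qed.

End Rep.

Section Chi.
Variables (R : comNzRingType) (F : finFieldType) (p : nat) (zeta : R) (e : F -> nat).
Hypothesis pp : prime p.
Hypothesis zsum : \sum_(i < p) zeta ^+ i = 0.
Hypothesis eadd : forall a b : F, e (a + b)%R = (e a + e b)%N %[mod p].

Lemma zp : zeta ^+ p = 1.
Proof. by apply/eqP; rewrite -subr_eq0 subrX1 zsum mulr0. Qed.

Lemma chiD a b : psiR zeta e (a + b) = psiR zeta e a * psiR zeta e b.
Proof. by rewrite /psiR -exprD -(expr_mod _ zp) eadd expr_mod // zp. Qed.

Lemma e0 : (e 0%R %% p = 0)%N.
Proof.
have := eadd 0 0; rewrite addr0 -{1}(addn0 (e 0)) => /eqP; rewrite eqn_modDl.
by move/eqP <-; rewrite mod0n.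
Qed.

Lemma chi0 : psiR zeta e 0 = 1.
Proof. by rewrite /psiR -(expr_mod _ zp) e0 expr0. Qed.

Lemma e_mul a i : (e (a *+ i) %% p = (i * e a) %% p)%N.
Proof.
elim: i => [|i IH]; first by rewrite mulr0n e0 mul0n mod0n.
by rewrite mulrS eadd -modnDmr IH modnDmr mulSn.
Qed.

Lemma chi_kill (pinv : R) : p%:R * pinv = 1 -> (exists a : F, (e a %% p != 0)%N) ->
  forall c : R, (forall x, psiR zeta e x * c = c) -> c = 0.
Proof.
move=> pinvE [a0 ea0] c Hc.
have p0 : (0 < p)%N := prime_gt0 pp.
have cop : coprime p (e a0) by rewrite prime_coprime // /dvdn.
pose h (i : 'I_p) : 'I_p := Ordinal (ltn_pmod (i * e a0) p0).
have hinj : injective h.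
  move=> i j /(congr1 val) /= /eqP hij; apply: val_inj => /=.
  wlog le : i j hij / (j <= i)%N.
    move=> W; case: (leqP j i) => le; first exact: W.
    by symmetry; apply: W; [rewrite eq_sym | exact: ltnW].
  move: hij; rewrite eqn_mod_dvd ?leq_mul2r ?le ?orbT // -mulnBl Gauss_dvdl //.
  move=> d; case: (posnP (i - j)) => [ij0 | pos].
    by apply/eqP; rewrite eqn_leq le andbT -subn_eq0 ij0.
  have := dvdn_leq pos d; rewrite leqNgt.
  by rewrite (leq_ltn_trans (leq_subr j i) (ltn_ord i)).
have S0 : \sum_(i < p) psiR zeta e (a0 *+ i) = 0.
  have zs := zsum; rewrite (reindex_inj hinj) in zs.
  by rewrite -[RHS]zs; apply: eq_bigr => i _; rewrite /psiR -(expr_mod _ zp) e_mul.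
have : \sum_(i < p) psiR zeta e (a0 *+ i) * c = c *+ p.
  by rewrite (eq_bigr (fun _ => c)) ?sumr_const ?card_ord.
rewrite -mulr_suml S0 mul0r -mulr_natl => /(congr1 (fun r => pinv * r)).
by rewrite mulr0 mulrA (mulrC pinv) pinvE mul1r.
Qed.

End Chi.

Theorem lemma2p14 (p : nat) (F : finFieldType) (n : nat)
  (R : comNzRingType) (zeta : R) (e : F -> nat)
  (V : lmodType R) (rho : {'GL_n.+1[F]} -> V -> V) (lam : V -> R) :
  prime p -> p \in [pchar F] ->
  noetherian R ->
  (exists pinv : R, p%:R * pinv = 1) -> \sum_(i < p) zeta ^+ i = 0 ->
  (forall a b : F, e (a + b)%R = (e a + e b)%N %[mod p]) ->
  (exists a : F, (e a %% p != 0)%N) ->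
  is_rep rho ->
  whittaker_type rho (unipotent F n) (psiN (n:=n) (psiR zeta e)) ->
  dual_generator rho (unipotent F n) (psiN (n:=n) (psiR zeta e)) lam ->
  forall f : {'GL_n.+1[F]} -> R,
    in_Ind (unipotent F n) (mirabolic F n) (psiN (n:=n) (psiR zeta e)) f ->
    exists W, whittaker_model rho lam W /\ {in mirabolic F n, W =1 f}.
Proof.
move=> pp pF _ [pinv pinvE] zsum eadd ea Hrep Hwt Hdg f Hf.
rewrite unip_eq in Hwt Hdg Hf; rewrite mirab_eq in Hf *.
set psi := psiN (n:=n) (psiR zeta e) in Hwt Hdg Hf *.
set N := Sset F n 0 in Hwt Hdg Hf *.
have [w0 Hw] := Hwt.
pose K := coinv_ker rho N psi.
have Hex : forall v, exists r, K (v - r *: w0).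
  by move=> v; case: (Hw v) => r [Hr _]; exists r.
pose mu v := proj1_sig (constructive_indefinite_description _ (Hex v)).
have muP v : K (v - mu v *: w0) := proj2_sig (constructive_indefinite_description _ (Hex v)).
have muU v r : K (v - r *: w0) -> mu v = r.
  by move=> Hr; case: (Hw v) => r0 [_ U]; rewrite -(U _ (muP v)); exact: U.
have mufun : coinv_functional rho N psi mu.
  split.
    move=> a u v; apply: muU.
    have -> : a *: u + v - (a * mu u + mu v) *: w0 =
              a *: (u - mu u *: w0) + (v - mu v *: w0).
      by rewrite scalerDl -scalerA scalerBr opprD addrACA.
    by apply: kerD; [apply: kerZ |]; exact: muP.
  by move=> v Kv; apply: muU; rewrite scale0r subr0.
case: Hdg => lamf Hgen.
have [r Hr] := Hgen _ mufun.
have mu1 : mu w0 = 1 by apply: muU; rewrite scale1r subrr; exact: ker0.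
pose v0 := r *: w0.
have lv0 : lam v0 = 1 by rewrite /v0 (lamZ lamf) -Hr mu1.
have [kN cardN] := p_natP (N_pgroup n pF).
pose cN := pinv ^+ kN.
have cNE : cN * (#|N|)%:R = 1.
  by rewrite cardN natrX /cN -exprMn (mulrC pinv) pinvE expr1n.
have [v Hv] := construct Hrep lamf (P := Sset F n n) (f := f) (Sset_group F n 0) (Sset_group F n n)
  (subsetP_helper F n) lv0 cNE
  (fun Phi Hl Hr h hP hN => vanish (chiD zsum eadd) (chi0 zsum eadd)
       (chi_kill pp zsum eadd pinvE ea) Hl Hr hP hN) Hf.
exists (fun g => lam (rho g v)); split; first by exists v.
by move=> h hP; exact: Hv.
Qed.
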